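(* A hypergraph ${\cal H}$ is $1$-Sperner if and only if either it has no vertices (that is, ${\cal H}\in\{(\emptyset,\emptyset),(\emptyset,\{\emptyset\})\}$) or it is a safe gluing of two $1$-Sperner hypergraphs each with fewer vertices than ${\cal H}$.
   Context: A hypergraph ${\cal H}=(V,{\cal E})$ consists of a finite vertex set $V$ and a set ${\cal E}$ of subsets of $V$. It is $1$-Sperner if every two distinct hyperedges $e,f$ satisfy $\min\{|e\setminus f|,|f\setminus e|\}=1$. Given vertex-disjoint hypergraphs ${\cal H}_1=(V_1,{\cal E}_1)$, ${\cal H}_2=(V_2,{\cal E}_2)$ and a new vertex $z\notin V_1\cup V_2$, the gluing ${\cal H}_1\odot{\cal H}_2$ has vertex set $V_1\cup V_2\cup\{z\}$ and hyperedge set $\{\{z\}\cup e: e\in{\cal E}_1\}\cup\{V_1\cup e: e\in{\cal E}_2\}$. A gluing is safe if it results in a $1$-Sperner hypergraph; for $1$-Sperner ${\cal H}_1,{\cal H}_2$ this is equivalent to ${\cal E}_1\neq\{V_1\}$ or ${\cal E}_2\neq\{\emptyset\}$. *)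

(* Defs.v *)
From mathcomp Require Import all_boot.
Set Implicit Arguments. Unset Strict Implicit. Unset Printing Implicit Defensive.

Definition hypergraph (T : finType) (V : {set T}) (E : {set {set T}}) : Prop :=
  forall e, e \in E -> e \subset V.

Definition one_sperner (T : finType) (E : {set {set T}}) : Prop :=
  forall e f, e \in E -> f \in E -> e != f ->
    minn #|e :\: f| #|f :\: e| = 1.

Definition glue_vertices (T : finType) (V1 V2 : {set T}) (z : T) : {set T} :=
  V1 :|: V2 :|: [set z].

Definition glue_edges (T : finType) (V1 : {set T}) (E1 E2 : {set {set T}})
    (z : T) : {set {set T}} :=
  [set z |: e | e in E1] :|: [set V1 :|: e | e in E2].

Definition safe_gluing (T : finType) (V1 : {set T}) (E1 E2 : {set {set T}})
    (z : T) : Prop :=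
  one_sperner (glue_edges V1 E1 E2 z).

(* Main.v *)
Require Import Defs.
From mathcomp Require Import all_boot zify.
Set Implicit Arguments. Unset Strict Implicit.

Definition good (T : finType) (E : {set {set T}}) (z : T) : Prop :=
  forall e f x, e \in E -> f \in E -> z \in e -> z \notin f ->
    x \in e -> x != z -> x \in f.

Lemma diff1 (T : finType) (A B : {set T}) x :
  #|A :\: B| = 1 -> x \in A -> x \notin B -> A :\: B = [set x].
Proof.
move=> /eqP /cards1P [a Ha] xA xB.
have : x \in A :\: B by rewrite inE xA xB.
by rewrite Ha inE => /eqP ->.
Qed.

Lemma card_diff_le (T : finType) (A B : {set T}) :
  #|A| <= #|B| -> #|A :\: B| <= #|B :\: A|.
Proof. by move=> h; rewrite !cardsD setIC; exact: leq_sub2r. Qed.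

Lemma minn1 a b : minn a b = 1 -> 1 < b -> a = 1.
Proof. lia. Qed.

Lemma le_diff1 (T : finType) (E : {set {set T}}) (A B : {set T}) :
  one_sperner E -> A \in E -> B \in E -> A != B -> #|A| <= #|B| ->
  #|A :\: B| = 1.
Proof.
move=> hS hA hB hne hle; have := hS _ _ hA hB hne.
have := card_diff_le hle; lia.
Qed.

Lemma good_exists (T : finType) (V : {set T}) (E : {set {set T}}) :
  hypergraph V E -> one_sperner E -> V != set0 ->
  exists2 z, z \in V & good E z.
Proof.
move=> hH hS /set0Pn [v vV].
case: (boolP [exists e0, exists g, [&& e0 \in E, g \in E & e0 != g]]); last first.
  move=> /existsPn hn; exists v => // e f x eE fE ze zf.
  have := hn e; move=> /existsPn /(_ f); rewrite eE fE /= negbK => /eqP ef.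
  by move: ze zf; rewrite ef => ->.
move=> /existsP [a0 /existsP [b0 /and3P [a0E b0E ab0]]].
case: (arg_minnP (fun e : {set T} => #|e|) a0E) => e0 e0E e0min.
have [g1 [g1E g1ne]] : exists g1, g1 \in E /\ g1 != e0.
  case: (eqVneq a0 e0) => [<-|h]; first by exists b0; rewrite b0E eq_sym.
  by exists a0.
have g1P : (g1 \in E :\ e0) by rewrite !inE g1ne.
case: (arg_maxnP (fun e : {set T} => #|e|) g1P) => g gP gmax.
have [gne gE] : g != e0 /\ g \in E.
  have : g \in E :\ e0 := gP. by rewrite !inE => /andP.
have hd : #|e0 :\: g| = 1 by apply: (le_diff1 hS) => //; [rewrite eq_sym | exact: e0min].
have /eqP /cards1P [z hz] := hd.
have : z \in e0 :\: g by rewrite hz inE.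
rewrite inE => /andP [zg ze0].
have e0d : forall f, f \in E -> f != e0 -> #|e0 :\: f| = 1.
  by move=> f fE fne; apply: (le_diff1 hS) => //; [rewrite eq_sym | exact: e0min].
exists z; first by apply: (subsetP (hH _ e0E)).
move=> e f w eE fE ze zf we wz; apply/negPn/negP => wf.
have fne0 : f != e0 by apply/eqP => fe; move: zf; rewrite fe ze0.
have ef : e != f by apply/eqP => ef; move: zf; rewrite -ef ze.
have c2 : 2 <= #|e :\: f|.
  have sub : [set z; w] \subset e :\: f.
    by apply/subsetP => x; rewrite !inE => /orP [] /eqP ->; rewrite ?ze ?zf ?we ?wf.
  by have := subset_leq_card sub; rewrite cards2 eq_sym wz.
have fe1 : #|f :\: e| = 1 by apply: minn1 c2; exact: (hS _ _ fE eE (contra_neq esym ef)).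
have ne0 : e != e0.
  by apply/eqP => ee; move: c2; rewrite ee (e0d _ fE fne0).
have eg : #|e :\: g| = 1.
  have eP : e \in E :\ e0 by rewrite !inE ne0 eE.
  apply: (le_diff1 hS) => //; last exact: gmax eP.
  by apply/eqP => eg; move: zg; rewrite -eg ze.
have egz : e :\: g = [set z] by apply: diff1.
have e0fz : e0 :\: f = [set z] by apply: diff1 => //; exact: e0d.
have /eqP /cards1P [y hy] := e0d _ eE ne0.
have : y \in e0 :\: e by rewrite hy inE.
rewrite inE => /andP [ye ye0].
have yz : y != z by apply/eqP => yz; move: ye; rewrite yz ze.
have yf : y \in f.
  apply/negPn/negP => yf; have : y \in e0 :\: f by rewrite inE ye0 yf.
  by rewrite e0fz inE (negbTE yz).
have feq : f :\: e = [set y] by apply: diff1.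
have e0gz : e0 :\: g = [set z] by [].
have eg_sub : forall x, x \in e -> x != z -> x \in g.
  move=> x xe xz; apply/negPn/negP => xg.
  have : x \in e :\: g by rewrite inE xe xg.
  by rewrite egz inE (negbTE xz).
have yg : y \in g.
  apply/negPn/negP => yg'; have : y \in e0 :\: g by rewrite inE ye0 yg'.
  by rewrite hz inE (negbTE yz).
have fg : f :\: g = set0.
  apply/setP => x; rewrite !inE; apply/negbTE; apply/negP => /andP [xg xf].
  case: (boolP (x \in e)) => xe.
  - have xz : x != z by apply/eqP => xz; move: zf; rewrite -xz xf.
    by move: xg; rewrite eg_sub.
  - have : x \in f :\: e by rewrite inE xe xf.
    by rewrite feq inE => /eqP xy; move: xg; rewrite xy yg.
have fng : f != g by apply/eqP => fg'; move: wf; rewrite fg' eg_sub.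
have := hS _ _ fE gE fng; rewrite fg cards0.
by rewrite min0n.
Qed.

Lemma decomp (T : finType) (V : {set T}) (E : {set {set T}}) (z : T) :
  hypergraph V E -> one_sperner E -> z \in V -> good E z ->
    exists (V1 : {set T}) (E1 : {set {set T}}) (V2 : {set T})
           (E2 : {set {set T}}) (z : T),
      [/\ hypergraph V1 E1, hypergraph V2 E2,
          [disjoint V1 & V2], z \notin V1 :|: V2 &
      [/\ one_sperner E1, one_sperner E2,
          #|V1| < #|V|, #|V2| < #|V| &
      [/\ safe_gluing V1 E1 E2 z,
          V = glue_vertices V1 V2 z &
          E = glue_edges V1 E1 E2 z]]].
Proof.
move=> hH hS zV hg.
set V1 := [set x in V | (x != z) && [forall f in E, (z \notin f) ==> (x \in f)]].
have mem1 : forall x, (x \in V1) = [&& x \in V, x != z & [forall f in E, (z \notin f) ==> (x \in f)]].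
  by move=> x; rewrite inE.
clearbody V1.
set V2 := [set x in V | (x != z) && (x \notin V1)].
set E1 := [set e :\ z | e in E & z \in e].
set E2 := [set f :\: V1 | f in E & z \notin f].
have V1f : forall f, f \in E -> z \notin f -> V1 \subset f.
  move=> f fE zf; apply/subsetP => x; rewrite mem1 => /and3P [_ _ /forall_inP h].
  by move: (h f fE); rewrite zf.
have zV1 : z \notin V1 by rewrite mem1 eqxx andbF.
have zV2 : z \notin V2 by rewrite inE eqxx andbF.
have hE : E = glue_edges V1 E1 E2 z.
  apply/setP => e; rewrite /glue_edges inE; apply/idP/idP.
  - move=> eE; case: (boolP (z \in e)) => ze.
    + apply/orP; left; apply/imsetP; exists (e :\ z); last by rewrite setD1K.
      by apply/imsetP; exists e => //; rewrite inE eE ze.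
    + apply/orP; right; apply/imsetP; exists (e :\: V1).
        by apply/imsetP; exists e => //; rewrite inE eE ze.
      apply/setP => x; rewrite !inE; case: (boolP (x \in V1)) => xV //=.
      by rewrite (subsetP (V1f _ eE ze)).
  - case/orP => /imsetP [e1 /imsetP [e2 eP ->] ->]; move: eP; rewrite inE => /andP [eE ze].
    + by rewrite setD1K.
    + suff -> : V1 :|: e2 :\: V1 = e2 by [].
      apply/setP => x; rewrite !inE; case: (boolP (x \in V1)) => xV //=.
      by rewrite (subsetP (V1f _ eE ze)).
exists V1, E1, V2, E2, z; split.
- move=> e' /imsetP [e eP ->]; move: eP; rewrite inE => /andP [eE ze].
  apply/subsetP => x; rewrite !inE => /andP [xz xe].
  rewrite mem1 (subsetP (hH _ eE)) // xz /=; apply/forall_inP => f fE; apply/implyP => zf.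
  exact: (hg e f x).
- move=> e' /imsetP [e eP ->]; move: eP; rewrite inE => /andP [eE ze].
  apply/subsetP => x; rewrite !inE => /andP [xV xe].
  rewrite (subsetP (hH _ eE)) // xV andbT /=.
  by apply/eqP => xz; move: ze; rewrite -xz xe.
- rewrite -setI_eq0; apply/eqP/setP => x; rewrite !inE; case: (x \in V1); rewrite ?andbF //.
- by rewrite inE negb_or zV1 zV2.
- split.
  + move=> a b /imsetP [e eP ->] /imsetP [f fP ->]; move: eP fP.
    rewrite !inE => /andP [eE ze] /andP [fE zf] ne.
    have ef : e != f by apply/eqP => ef0; move: ne; rewrite ef0 eqxx.
    have hd : forall A B : {set T}, z \in A -> z \in B -> (A :\ z) :\: (B :\ z) = A :\: B.
      move=> A B zA zB; apply/setP => x; rewrite !inE.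
      by case: (eqVneq x z) => [->|]; rewrite ?zA ?zB //= ?andbT.
    by rewrite !hd //; apply: hS.
  + move=> a b /imsetP [e eP ->] /imsetP [f fP ->]; move: eP fP.
    rewrite !inE => /andP [eE ze] /andP [fE zf] ne.
    have ef : e != f by apply/eqP => ef0; move: ne; rewrite ef0 eqxx.
    have hd : forall A B : {set T}, A \in E -> z \notin A -> B \in E -> z \notin B ->
        (A :\: V1) :\: (B :\: V1) = A :\: B.
      move=> A B AE zA BE zB; apply/setP => x; rewrite !inE.
      case: (boolP (x \in V1)) => xV /=.
        by rewrite (subsetP (V1f _ BE zB)).
      by case: (x \in B); case: (x \in A).
    by rewrite !hd //; apply: hS.
  + apply: proper_card; apply/properP; split; last by exists z.
    by apply/subsetP => x; rewrite mem1 => /andP [].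
  + apply: proper_card; apply/properP; split; last by exists z.
    by apply/subsetP => x; rewrite inE => /andP [].
  + split.
    * by rewrite /safe_gluing -hE.
    * apply/setP => x; rewrite /glue_vertices !inE.
      case: (eqVneq x z) => [->|xz]; first by rewrite zV !orbT.
      rewrite orbF /=; case: (boolP (x \in V)) => xV /=.
        by case: (x \in V1).
      by rewrite mem1 (negbTE xV).
    * exact: hE.
Qed.

Theorem theorem10 (T : finType) (V : {set T}) (E : {set {set T}}) :
  hypergraph V E ->
  (one_sperner E <->
   (V = set0 \/
    exists (V1 : {set T}) (E1 : {set {set T}}) (V2 : {set T})
           (E2 : {set {set T}}) (z : T),
      [/\ hypergraph V1 E1, hypergraph V2 E2,
          [disjoint V1 & V2], z \notin V1 :|: V2 &
      [/\ one_sperner E1, one_sperner E2,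
          #|V1| < #|V|, #|V2| < #|V| &
      [/\ safe_gluing V1 E1 E2 z,
          V = glue_vertices V1 V2 z &
          E = glue_edges V1 E1 E2 z]]])).
Proof.
move=> hH; split.
- move=> hS; case: (eqVneq V set0) => [->|nV]; first by left.
  right; have [z zV hg] := good_exists hH hS nV; exact: decomp hH hS zV hg.
- case.
  + move=> V0 e f eE fE ne; exfalso; move: ne.
    have := hH _ eE; have := hH _ fE; rewrite V0 !subset0 => /eqP -> /eqP ->.
    by rewrite eqxx.
  + by move=> [V1 [E1 [V2 [E2 [z [_ _ _ _ [_ _ _ _ [hs _ ->]]]]]]]].
Qed.
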